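(* Let $k_1>k_2>0$ be integers and $p=\frac{k_1}{k_1+k_2}$. Then, as $t\to\infty$ through the positive integers, $$\lim_{t\to\infty}\sum_{i=0}^\infty\binom{tk_1+tk_2+2i}{tk_1+i}p^{tk_1+i}(1-p)^{tk_2+i}=\frac{1/4}{p-\frac12}.$$ *)

(* Defs.v *)
From Stdlib Require Import Reals.
From Coquelicot Require Import Coquelicot.
Open Scope R_scope.

Definition pk (k1 k2 : nat) : R := INR k1 / (INR k1 + INR k2).

Definition term (k1 k2 t i : nat) : R :=
  Binomial.C (t * k1 + t * k2 + 2 * i)%nat (t * k1 + i)%nat
  * (pk k1 k2) ^ (t * k1 + i)%nat * (1 - pk k1 k2) ^ (t * k2 + i)%nat.

(* Submission.v *)
Require Import Defs.
From Stdlib Require Import Reals Lra Lia Arith.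
From Coquelicot Require Import Coquelicot.
Open Scope R_scope.


Fixpoint sm (f : nat -> R) (n : nat) : R :=
  match n with O => 0 | S n => sm f n + f n end.

Lemma sm_ext f g n : (forall i, (i < n)%nat -> f i = g i) -> sm f n = sm g n.
Proof. induction n; simpl; intros H; auto. rewrite IHn, H; auto. Qed.

Lemma sm_plus f g n : sm (fun i => f i + g i) n = sm f n + sm g n.
Proof. induction n; simpl; [lra|rewrite IHn; lra]. Qed.

Lemma sm_minus f g n : sm (fun i => f i - g i) n = sm f n - sm g n.
Proof. induction n; simpl; [lra|rewrite IHn; lra]. Qed.

Lemma sm_scal c f n : sm (fun i => c * f i) n = c * sm f n.
Proof. induction n; simpl; [lra|rewrite IHn; lra]. Qed.

Lemma sm_le f g n : (forall i, (i < n)%nat -> f i <= g i) -> sm f n <= sm g n.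
Proof. induction n; simpl; intros H; [lra|]. assert (f n <= g n) by auto.
  assert (sm f n <= sm g n) by auto. lra. Qed.

Lemma sm_nonneg f n : (forall i, (i < n)%nat -> 0 <= f i) -> 0 <= sm f n.
Proof. intros H. replace 0 with (sm (fun _ => 0) n). apply sm_le; auto.
  clear; induction n; simpl; lra. Qed.

Lemma sm_abs f n : Rabs (sm f n) <= sm (fun i => Rabs (f i)) n.
Proof. induction n; simpl. rewrite Rabs_R0; lra.
  eapply Rle_trans. apply Rabs_triang. lra. Qed.

Lemma sm_shift f n : sm f (S n) = f 0%nat + sm (fun i => f (S i)) n.
Proof. induction n; simpl in *; [lra|]. rewrite IHn. lra. Qed.

Lemma sm_add f m n : sm f (m + n) = sm f m + sm (fun i => f (m + i)%nat) n.
Proof. induction n; simpl. rewrite Nat.add_0_r; lra.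
  rewrite Nat.add_succ_r; simpl; rewrite IHn; lra. Qed.

Lemma sm_zero_tail f m n : (forall i, (m <= i)%nat -> f i = 0) -> (m <= n)%nat -> sm f n = sm f m.
Proof. intros H Hmn. induction Hmn; simpl; auto. rewrite H; [lra|lia]. Qed.

Lemma sm_rev f n : sm f n = sm (fun i => f (n - S i)%nat) n.
Proof. induction n; auto.
  rewrite (sm_shift (fun i => f (S n - S i)%nat)).
  change (sm f (S n)) with (sm f n + f n).
  replace (S n - 1)%nat with n by lia.
  rewrite IHn. simpl. lra. Qed.

Lemma sum_f_R0_sm f n : sum_f_R0 f n = sm f (S n).
Proof. induction n as [|n IH]. simpl; lra. change (sum_f_R0 f n + f (S n) = sm f (S n) + f (S n)). rewrite IH; lra. Qed.


Fixpoint bin (n k : nat) : nat :=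
  match n, k with
  | _, O => 1%nat
  | O, S _ => 0%nat
  | S n, S k => (bin n k + bin n (S k))%nat
  end.
Definition c n k := INR (bin n k).

Lemma c_n0 n : c n 0 = 1. Proof. destruct n; reflexivity. Qed.
Lemma c_0S k : c 0 (S k) = 0. Proof. reflexivity. Qed.
Lemma c_pascal n k : c (S n) (S k) = c n k + c n (S k).
Proof. unfold c; simpl; rewrite plus_INR; auto. Qed.
Lemma c_nonneg n k : 0 <= c n k. Proof. apply pos_INR. Qed.

Lemma c_gt n k : (n < k)%nat -> c n k = 0.
Proof. revert k; induction n; intros k H. destruct k; [lia|apply c_0S].
  destruct k; [lia|]. rewrite c_pascal, !IHn; try lia; lra. Qed.

Lemma c_nn n : c n n = 1.
Proof. induction n. apply c_n0. rewrite c_pascal, IHn, c_gt; [lra|lia]. Qed.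

Lemma c_ratio n k : c n (S k) * INR (S k) = c n k * (INR n - INR k).
Proof. revert k; induction n; intros k.
  - destruct k. rewrite c_0S, c_n0; simpl; lra. rewrite !c_0S; lra.
  - rewrite c_pascal. rewrite Rmult_plus_distr_r, IHn.
    destruct k.
    + rewrite !c_n0. rewrite (S_INR n). change (INR 1) with 1. change (INR 0) with 0. lra.
    + rewrite c_pascal. specialize (IHn k). rewrite !S_INR in *.
      rewrite Rmult_plus_distr_r.
      replace (c n k * (INR n + 1 - (INR k + 1))) with (c n k * (INR n - INR k)) by ring.
      rewrite <- IHn. ring. Qed.

Lemma c_C n k : (k <= n)%nat -> c n k = Binomial.C n k.
Proof. revert k; induction n; intros k H.
  - replace k with 0%nat by lia. rewrite c_n0, C_n_0; auto.
  - destruct k. rewrite c_n0, C_n_0; auto.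
    destruct (Nat.eq_dec k n). subst. rewrite c_nn, C_n_n; auto.
    rewrite c_pascal, <- pascal by lia. rewrite !IHn by lia. auto. Qed.

Lemma c_sym n k : (k <= n)%nat -> c n k = c n (n - k).
Proof. intros H. rewrite !c_C by lia. apply pascal_step1; auto. Qed.

Lemma binom_c x y n : sm (fun k => c n k * x ^ k * y ^ (n - k)) (S n) = (x + y) ^ n.
Proof. rewrite binomial, sum_f_R0_sm. apply sm_ext. intros i Hi. rewrite c_C by lia; auto. Qed.


Definition gV n K j := if (j <=? K)%nat then c n (K - j) else 0.

Lemma gV_SS n K j : gV n (S K) (S j) = gV n K j.
Proof. unfold gV. simpl. destruct (j <=? K)%nat; auto. Qed.
Lemma gV_0 n K : gV n K 0 = c n K.
Proof. unfold gV. simpl. rewrite Nat.sub_0_r; auto. Qed.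
Lemma gV_0S n j : gV n 0 (S j) = 0.
Proof. reflexivity. Qed.
Lemma sm_0 n : sm (fun _ => 0) n = 0.
Proof. induction n; simpl; lra. Qed.

Lemma vandermonde m n k : c (m + n) k = sm (fun j => c m j * gV n k j) (S m).
Proof. revert k; induction m; intros k.
  - simpl. rewrite gV_0, c_n0. lra.
  - destruct k.
    + rewrite c_n0, sm_shift. rewrite c_n0, gV_0, c_n0.
      rewrite (sm_ext _ (fun _ => 0)). rewrite sm_0; lra.
      intros i _. rewrite gV_0S. lra.
    + rewrite Nat.add_succ_l, c_pascal.
      rewrite sm_shift. rewrite c_n0, gV_0.
      rewrite (sm_ext _ (fun i => c m i * gV n k i + c m (S i) * gV n k i)).
      2:{ intros i _. rewrite gV_SS, c_pascal. ring. }
      rewrite sm_plus. rewrite <- IHm. rewrite (IHm (S k)). rewrite sm_shift.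
      rewrite c_n0, gV_0.
      change (sm (fun i : nat => c m (S i) * gV n k i) (S m)) with
        (sm (fun i : nat => c m (S i) * gV n k i) m + c m (S m) * gV n k m).
      rewrite (c_gt m (S m)) by lia.
      rewrite (sm_ext (fun i => c m (S i) * gV n (S k) (S i)) (fun i => c m (S i) * gV n k i)).
      lra. intros; rewrite gV_SS; auto. Qed.


Lemma is_series_Rplus (a b : nat -> R) la lb :
  is_series a la -> is_series b lb -> is_series (fun n => a n + b n) (la + lb).
Proof. intros. apply (is_series_plus a b la lb); auto. Qed.
Lemma is_series_Rscal (k : R) (a : nat -> R) l :
  is_series a l -> is_series (fun n => k * a n) (k * l).
Proof. intros. apply (is_series_scal k a l); auto. Qed.
Lemma is_series_shift (a : nat -> R) (l : R) :
  is_series a l -> is_series (fun n => a (S n)) (l - a 0%nat).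
Proof. intros H. apply is_series_incr_1.
  replace (@plus (NormedModule.AbelianMonoid R_AbsRing R_NormedModule) (l - a 0%nat) (a 0%nat)) with l. exact H.
  unfold plus; simpl. unfold Rminus. rewrite Rplus_assoc, Rplus_opp_l, Rplus_0_r. reflexivity. Qed.
Lemma is_series_uniq (a : nat -> R) l1 l2 : is_series a l1 -> is_series a l2 -> l1 = l2.
Proof. intros H1 H2. rewrite <- (is_series_unique a l1), <- (is_series_unique a l2); auto. Qed.

Lemma is_series_ext_R (a b : nat -> R) (l : R) :
  (forall n, a n = b n) -> is_series a l -> is_series b l.
Proof. apply is_series_ext. Qed.

Lemma is_series_zero : is_series (fun _ : nat => 0) 0.
Proof. assert (H := is_series_Rscal 0 _ _ (is_series_geom (/2) ltac:(rewrite Rabs_right; lra))).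
  rewrite Rmult_0_l in H. eapply is_series_ext_R; [|apply H]. intros; simpl; ring. Qed.

Lemma sm_term_le f n i : (forall j, (j < n)%nat -> 0 <= f j) -> (i < n)%nat -> f i <= sm f n.
Proof. induction n; intros H Hi; [lia|]. simpl. destruct (Nat.eq_dec i n).
  subst. assert (0 <= sm f n) by (apply sm_nonneg; auto). lra.
  assert (f i <= sm f n) by (apply IHn; auto; lia). assert (0 <= f n) by auto. lra. Qed.

Lemma c_le_pow n k : c n k <= 2 ^ n.
Proof. destruct (Nat.le_gt_cases k n).
  - replace (2 ^ n) with ((1 + 1) ^ n) by (f_equal; lra). rewrite <- binom_c.
    eapply Rle_trans; [|apply (sm_term_le _ _ k)]; try lia.
    cbv beta. rewrite !pow1; lra. intros j _. rewrite !pow1. rewrite Rmult_1_r, Rmult_1_r. apply c_nonneg.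
  - rewrite c_gt by lia. apply pow_le; lra. Qed.

Section AK.
Variables p q : R.
Hypothesis hp : 0 < q. Hypothesis hqp : q < p. Hypothesis hpq : p + q = 1.

Definition xx := p * q.
Definition u k i := c (2 * i) (i + k) * xx ^ i.

Lemma x4 : 0 <= 4 * xx < 1.
Proof. unfold xx. split. nra. assert (p = 1 - q) by lra. subst. nra. Qed.

Lemma u_bound k i : 0 <= u k i <= (4 * xx) ^ i.
Proof. unfold u. split. apply Rmult_le_pos. apply c_nonneg. apply pow_le. unfold xx; nra.
  rewrite Rpow_mult_distr. apply Rmult_le_compat_r. apply pow_le. unfold xx; nra.
  replace 4 with (2 ^ 2) by lra. rewrite <- pow_mult. apply c_le_pow. Qed.

Lemma u_ex k : ex_series (u k).
Proof. apply (@ex_series_le R_AbsRing R_CompleteNormedModule _ (fun i => (4 * xx) ^ i)).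
  intros i. change (norm (u k i)) with (Rabs (u k i)). destruct (u_bound k i).
  rewrite Rabs_right; lra. apply ex_series_geom. pose proof x4. rewrite Rabs_right; lra. Qed.

Definition A k := Series (u k).
Lemma A_is k : is_series (u k) (A k). Proof. apply Series_correct, u_ex. Qed.

Definition BB := / (1 - 4 * xx).
Lemma A_bound k : 0 <= A k <= BB.
Proof. pose proof x4. unfold A, BB. split.
  - rewrite <- (is_series_unique _ _ is_series_zero). apply Series_le. intros; pose proof (u_bound k n); lra. apply u_ex.
  - rewrite <- (is_series_unique _ _ (is_series_geom (4*xx) ltac:(rewrite Rabs_right; lra))).
    apply Series_le. intros; apply u_bound. apply ex_series_geom. rewrite Rabs_right; lra. Qed.

Lemma c_dpascal n j : c (S (S n)) (S (S j)) = c n j + 2 * c n (S j) + c n (S (S j)).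
Proof. rewrite !c_pascal. ring. Qed.

Lemma A_rec k : A (S k) = xx * (A k + 2 * A (S k) + A (S (S k))).
Proof. pose proof (is_series_shift _ _ (A_is (S k))) as H1.
  assert (H2 : is_series (fun i => xx * (u k i + 2 * u (S k) i + u (S (S k)) i))
     (xx * (A k + 2 * A (S k) + A (S (S k))))).
  { apply is_series_Rscal. apply is_series_Rplus. apply is_series_Rplus. apply A_is.
    apply is_series_Rscal, A_is. apply A_is. }
  assert (Hu0 : u (S k) 0 = 0). { unfold u. simpl. rewrite c_0S. ring. }
  rewrite Hu0, Rminus_0_r in H1. eapply is_series_uniq. apply H1.
  eapply is_series_ext_R; [|apply H2]. intros i. unfold u.
  replace (2 * S i)%nat with (S (S (2 * i))) by lia.
  replace (S i + S k)%nat with (S (S (i + k))) by lia.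
  rewrite c_dpascal. replace (i + S k)%nat with (S (i + k)) by lia.
  replace (i + S (S k))%nat with (S (S (i + k))) by lia. simpl pow. ring. Qed.

Lemma c_mid i : c (2 * S i) (S i + 0) = 2 * (c (2 * i) (i + 0) + c (2 * i) (i + 1)).
Proof. replace (2 * S i)%nat with (S (S (2 * i))) by lia. rewrite !Nat.add_0_r.
  rewrite c_pascal. rewrite (c_sym (S (2 * i)) i) by lia.
  replace (S (2 * i) - i)%nat with (S i) by lia. rewrite c_pascal.
  replace (i + 1)%nat with (S i) by lia. ring. Qed.

Lemma A_rec0 : A 0 = 1 + 2 * xx * (A 0 + A 1).
Proof. pose proof (is_series_shift _ _ (A_is 0)) as H1.
  assert (H2 : is_series (fun i => 2 * xx * (u 0 i + u 1 i)) (2 * xx * (A 0 + A 1))).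
  { apply is_series_Rscal. apply is_series_Rplus; apply A_is. }
  assert (Hu0 : u 0 0 = 1). { unfold u. simpl. rewrite c_n0. ring. }
  rewrite Hu0 in H1. assert (A 0 - 1 = 2 * xx * (A 0 + A 1)).
  eapply is_series_uniq. apply H1.
  eapply is_series_ext_R; [|apply H2]. intros i. unfold u. rewrite c_mid. simpl pow. ring.
  lra. Qed.

Definition rr := q / p.

Lemma rr_pos : 0 < rr < 1.
Proof. unfold rr. split. apply Rdiv_lt_0_compat; lra. apply Rmult_lt_reg_r with p. lra.
  unfold Rdiv. rewrite Rmult_assoc, Rinv_l; lra. Qed.

Lemma xx_rr : (1 - 2 * xx) / xx = rr + / rr.
Proof. unfold xx, rr. assert (p = 1 - q) by lra. subst. field. split; lra. Qed.

Lemma D_rec k : A (S (S k)) - rr * A (S k) = / rr * (A (S k) - rr * A k).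
Proof. pose proof (A_rec k). pose proof rr_pos. assert (0 < xx) by (unfold xx; nra).
  assert (A (S (S k)) = (1 - 2 * xx) / xx * A (S k) - A k).
  { apply Rmult_eq_reg_l with xx; [|lra]. unfold Rdiv. field_simplify; [|lra]. lra. }
  rewrite H2, xx_rr. field. lra. Qed.

Lemma D_pow k : A (S k) - rr * A k = (/ rr) ^ k * (A 1 - rr * A 0).
Proof. induction k. simpl; ring. rewrite D_rec, IHk. simpl. ring. Qed.

Lemma D0 : A 1 - rr * A 0 = 0.
Proof. destruct (Req_dec (A 1 - rr * A 0) 0) as [|Hne]; auto. exfalso.
  pose proof rr_pos.
  destruct (Pow_x_infinity (/ rr) ltac:(rewrite Rabs_right; [apply Rlt_gt; rewrite <- Rinv_1; apply Rinv_lt_contravar; lra | left; apply Rinv_0_lt_compat; lra])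
     ((2 * BB + 1) / Rabs (A 1 - rr * A 0))) as [N HN].
  specialize (HN N (le_n _)). pose proof (D_pow N) as HD.
  pose proof (A_bound (S N)). pose proof (A_bound N).
  assert (Rabs (A (S N) - rr * A N) <= 2 * BB).
  { apply Rabs_le. split; nra. }
  rewrite HD, Rabs_mult in H2.
  assert (0 < Rabs (A 1 - rr * A 0)) by (apply Rabs_pos_lt; auto).
  assert (Rabs ((/rr)^N) * Rabs (A 1 - rr * A 0) >= (2 * BB + 1)).
  { apply Rle_ge. apply Rge_le in HN. unfold Rdiv in HN.
    apply Rmult_le_compat_r with (r := Rabs (A 1 - rr * A 0)) in HN; [|lra].
    rewrite Rmult_assoc, Rinv_l in HN; lra. }
  lra. Qed.

Lemma A_val k : A k = rr ^ k / (p - q).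
Proof. assert (HA : forall k, A k = rr ^ k * A 0).
  { induction k0. simpl; ring. pose proof (D_pow k0). rewrite D0, Rmult_0_r in H.
    simpl. rewrite Rmult_assoc, <- IHk0. lra. }
  rewrite HA. pose proof A_rec0. rewrite (HA 1%nat) in H. simpl in H.
  assert (A 0 * (1 - 2 * xx * (1 + rr)) = 1) by lra.
  assert (xx * (1 + rr) = q). { unfold xx, rr. replace (p * q * (1 + q / p)) with (q * (p + q)) by (field; lra). rewrite hpq; ring. }
  replace (1 - 2 * xx * (1 + rr)) with (p - q) in H0 by (rewrite Rmult_assoc, H1; lra).
  assert (A 0 = / (p - q)). { apply Rmult_eq_reg_l with (p - q); [|lra]. rewrite Rinv_r by lra. lra. }
  rewrite H2. unfold Rdiv. auto. Qed.

End AK.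


Lemma is_series_sm n (f : nat -> nat -> R) (l : nat -> R) :
  (forall x, (x < n)%nat -> is_series (f x) (l x)) ->
  is_series (fun i => sm (fun x => f x i) n) (sm l n).
Proof. induction n; intros H; simpl.
  - apply is_series_zero.
  - apply is_series_Rplus; auto. Qed.

Section F.
Variables p q : R.
Hypothesis hp : 0 < q. Hypothesis hqp : q < p. Hypothesis hpq : p + q = 1.

Definition phi a x := if (x <=? a)%nat then 1 else rr p q ^ (2 * (x - a)).
Definition pi N x := c N x * p ^ x * q ^ (N - x).
Definition T a x i := if (x <=? a)%nat then u p q (a - x) i * (p / q) ^ (a - x)
                      else u p q (x - a) i * (q / p) ^ (x - a).

Lemma T_series a x : is_series (T a x) (phi a x / (p - q)).
Proof. unfold T, phi. destruct (x <=? a)%nat.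
  - replace (1 / (p - q)) with ((p / q) ^ (a - x) * A p q (a - x)).
    eapply is_series_ext_R; [|apply is_series_Rscal, A_is]; auto. intros; simpl; ring.
    rewrite A_val by auto. unfold rr. set (k := (a - x)%nat).
    replace ((p / q) ^ k * ((q / p) ^ k / (p - q))) with ((p / q * (q / p)) ^ k / (p - q)) by (rewrite Rpow_mult_distr; field; lra).
    replace (p / q * (q / p)) with 1 by (field; lra). rewrite pow1. field; lra.
  - replace (rr p q ^ (2 * (x - a)) / (p - q)) with ((q / p) ^ (x - a) * A p q (x - a)).
    eapply is_series_ext_R; [|apply is_series_Rscal, A_is]; auto. intros; simpl; ring.
    rewrite A_val by auto. unfold rr. replace (2*(x-a))%nat with ((x-a)+(x-a))%nat by lia. rewrite pow_add. field. lra. Qed.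

Lemma decomp a b i x : (x <= a + b)%nat ->
  c (a + b) x * c (2 * i) (a + i - x) * (if (x <=? a + i)%nat then 1 else 0) * p ^ (a + i) * q ^ (b + i)
  = pi (a + b) x * T a x i.
Proof. intros Hx. unfold pi, T, u, xx.
  assert (p <> 0) by lra. assert (q <> 0) by lra.
  destruct (Nat.leb_spec x a).
  - replace (x <=? a + i)%nat with true by (symmetry; apply Nat.leb_le; lia).
    replace (a + i - x)%nat with (i + (a - x))%nat by lia.
    set (k := (a - x)%nat). replace (a + b - x)%nat with (k + b)%nat by lia.
    replace (a + i)%nat with (x + k + i)%nat by lia.
    rewrite !pow_add. unfold Rdiv. rewrite Rpow_mult_distr, Rpow_mult_distr, pow_inv.
    field. apply pow_nonzero; auto.
  - set (m := (x - a)%nat). replace (a + b - x)%nat with (b - m)%nat by lia.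
    destruct (Nat.leb_spec x (a + i)).
    + replace (a + i - x)%nat with (i - m)%nat by lia.
      rewrite (c_sym (2 * i) (i - m)) by lia. replace (2 * i - (i - m))%nat with (i + m)%nat by lia.
      replace (p ^ x) with (p ^ a * p ^ m) by (rewrite <- pow_add; f_equal; lia).
      replace (b + i)%nat with (b - m + m + i)%nat by lia.
      rewrite !pow_add. unfold Rdiv. rewrite Rpow_mult_distr, Rpow_mult_distr, pow_inv.
      field. apply pow_nonzero; auto.
    + rewrite (c_gt (2 * i) (i + m)) by lia. ring. Qed.

Definition Phi a b := sm (fun x => pi (a + b) x * phi a x) (S (a + b)).

Lemma F_series a b :
  is_series (fun i => c (a + b + 2 * i) (a + i) * p ^ (a + i) * q ^ (b + i)) (Phi a b / (p - q)).
Proof.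
  assert (E : Phi a b / (p - q) = sm (fun x => pi (a + b) x * (phi a x / (p - q))) (S (a + b))).
  { unfold Phi, Rdiv. rewrite Rmult_comm, <- sm_scal. apply sm_ext. intros; ring. }
  rewrite E. eapply is_series_ext_R; [|apply (is_series_sm _ (fun x i => pi (a + b) x * T a x i))].
  - intros i. cbv beta. rewrite vandermonde. rewrite Rmult_assoc, Rmult_comm.
    rewrite <- sm_scal. apply sm_ext. intros x Hx. rewrite <- decomp by lia.
    unfold gV. destruct (x <=? a + i)%nat; ring.
  - intros x Hx. apply is_series_Rscal, T_series. Qed.
End F.


Lemma split_sum (g : nat -> R) a N : (a <= N)%nat -> (forall x, (N < x)%nat -> g x = 0) ->
  sm g (S N) = g a + sm (fun j => (if (S j <=? a)%nat then g (a - S j)%nat else 0) + g (a + S j)%nat) N.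
Proof. intros Ha Hg. rewrite sm_plus.
  assert (E1 : sm (fun j => if (S j <=? a)%nat then g (a - S j)%nat else 0) N = sm g a).
  { rewrite (sm_zero_tail _ a N); auto.
    rewrite (sm_rev g a). apply sm_ext. intros i Hi. destruct (Nat.leb_spec (S i) a); [auto|lia].
    intros i Hi. destruct (Nat.leb_spec (S i) a); [lia|auto]. }
  assert (E2 : sm (fun j => g (a + S j)%nat) N = sm (fun j => g (a + S j)%nat) (N - a)).
  { apply sm_zero_tail. intros; apply Hg; lia. lia. }
  rewrite E1, E2.
  replace (S N) with (a + S (N - a))%nat by lia. rewrite sm_add, sm_shift, Nat.add_0_r.
  assert (E3 : sm (fun i => g (a + S i)%nat) (N - a) = sm (fun j => g (a + S j)%nat) (N - a)) by auto.
  lra. Qed.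

Lemma sm_len_le f m n : (m <= n)%nat -> (forall i, 0 <= f i) -> sm f m <= sm f n.
Proof. intros H Hf. induction H as [|n H IH]; simpl; [lra|]. pose proof (Hf n). lra. Qed.

Lemma bernoulli u j : 0 <= u <= 1 -> 1 - INR j * u <= (1 - u) ^ j.
Proof. intros Hu. induction j. simpl; lra. rewrite S_INR. simpl.
  assert (0 <= (1 - u) ^ j) by (apply pow_le; lra).
  assert (0 <= INR j) by apply pos_INR. nra. Qed.

Lemma geom_sum r n : 0 <= r < 1 -> sm (fun j => r ^ j) n <= / (1 - r).
Proof. intros Hr. assert (sm (fun j => r ^ j) n = (1 - r ^ n) / (1 - r)).
  { induction n; simpl. field; lra. rewrite IHn. field; lra. }
  rewrite H. assert (0 <= r ^ n) by (apply pow_le; lra). unfold Rdiv.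
  rewrite <- (Rmult_1_l (/ (1 - r))) at 2.
  apply Rmult_le_compat_r. left; apply Rinv_0_lt_compat; lra. lra. Qed.

Section E.
Variables p q : R.
Hypothesis hp : 0 < q. Hypothesis hqp : q < p. Hypothesis hpq : p + q = 1.

Notation pi := (pi p q).

Lemma pi_nonneg N x : 0 <= pi N x.
Proof. unfold Submission.pi. apply Rmult_le_pos. apply Rmult_le_pos. apply c_nonneg. apply pow_le; lra. apply pow_le; lra. Qed.

Lemma pi_zero N x : (N < x)%nat -> pi N x = 0.
Proof. intros. unfold Submission.pi. rewrite c_gt by auto. ring. Qed.

Lemma pi_ratio N x : pi N (S x) * INR (S x) * q = pi N x * (INR N - INR x) * p.
Proof. unfold Submission.pi. pose proof (c_ratio N x) as H.
  replace (c N (S x) * p ^ S x * q ^ (N - S x) * INR (S x) * q) with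
    ((c N (S x) * INR (S x)) * p ^ S x * q ^ (N - S x) * q) by ring. rewrite H.
  destruct (Nat.lt_ge_cases x N).
  - replace (N - x)%nat with (S (N - S x)) by lia. simpl. ring.
  - destruct (Nat.eq_dec x N). subst. replace (INR N - INR N) with 0 by ring. ring.
    rewrite (c_gt N x) by lia. ring. Qed.

Lemma pi_total N : sm (pi N) (S N) = 1.
Proof. unfold Submission.pi. rewrite (binom_c p q N), hpq, pow1. auto. Qed.

Lemma shift_sum (g : nat -> R) N : g 0%nat = 0 -> g (S N) = 0 ->
  sm (fun x => g (S x)) (S N) = sm g (S N).
Proof. intros H0 HN. pose proof (sm_shift g (S N)). simpl in H. simpl. lra. Qed.

Lemma moment1 N : sm (fun x => pi N x * INR x) (S N) = INR N * p.
Proof.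
  assert (H : sm (fun x => pi N (S x) * INR (S x) * q) (S N) = sm (fun x => pi N x * (INR N - INR x) * p) (S N)).
  { apply sm_ext. intros; apply pi_ratio. }
  rewrite (sm_ext _ (fun x => q * (pi N (S x) * INR (S x)))) in H by (intros; ring).
  rewrite (sm_ext (fun x => pi N x * (INR N - INR x) * p) (fun x => p * INR N * pi N x - p * (pi N x * INR x))) in H by (intros; ring).
  rewrite sm_minus, !sm_scal, pi_total in H.
  rewrite (shift_sum (fun x => pi N x * INR x)) in H. nra.
  simpl; ring. rewrite pi_zero by lia; ring. Qed.

Lemma moment2 N : sm (fun x => pi N x * (INR x * INR x)) (S N) = INR N * p * (q + INR N * p).
Proof.
  assert (H : sm (fun x => pi N (S x) * INR (S x) * q * INR x) (S N) = sm (fun x => pi N x * (INR N - INR x) * p * INR x) (S N)).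
  { apply sm_ext. intros; rewrite pi_ratio; auto. }
  rewrite (sm_ext _ (fun x => q * (pi N (S x) * (INR (S x) * INR (S x)) - pi N (S x) * INR (S x)))) in H by (intros; rewrite S_INR; ring).
  rewrite (sm_ext (fun x => pi N x * (INR N - INR x) * p * INR x) (fun x => p * INR N * (pi N x * INR x) - p * (pi N x * (INR x * INR x)))) in H by (intros; ring).
  rewrite !sm_scal, !sm_minus, !sm_scal in H.
  rewrite (shift_sum (fun x => pi N x * (INR x * INR x))), (shift_sum (fun x => pi N x * INR x)), moment1 in H.
  nra. simpl; ring. rewrite pi_zero by lia; ring. simpl; ring. rewrite pi_zero by lia; ring. Qed.

Lemma variance a b : INR a * q = INR b * p ->
  sm (fun x => pi (a + b) x * (INR x - INR a) ^ 2) (S (a + b)) = INR a * q.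
Proof. intros Hab. assert (Ha : INR a = INR (a + b) * p). { rewrite plus_INR. nra. }
  rewrite (sm_ext _ (fun x => pi (a + b) x * (INR x * INR x) - 2 * INR a * (pi (a + b) x * INR x) + INR a * INR a * pi (a+b) x)) by (intros; ring).
  rewrite !sm_plus, !sm_minus, !sm_scal, moment1, moment2, pi_total. rewrite <- Ha. ring. Qed.

End E.


Lemma step_up (X Y X' Y' G e P1 P2 M1 M2 : R) :
  0 <= Y' -> 0 <= G -> 0 < M1 -> 0 < M2 -> 0 <= P1 ->
  X' * M1 = X * P1 -> Y * M2 = Y' * P2 ->
  X <= Y * G -> P1 * P2 <= e * (M1 * M2) -> X' <= Y' * (G * e).
Proof. intros HY' HG HM1 HM2 HP1 E1 E2 HX Hk.
  assert (X' * (M1 * M2) <= Y' * (G * e) * (M1 * M2)).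
  { replace (X' * (M1 * M2)) with (X * P1 * M2) by (rewrite <- E1; ring).
    apply Rle_trans with (Y * G * P1 * M2). apply Rmult_le_compat_r; [lra|]. apply Rmult_le_compat_r; lra.
    replace (Y * G * P1 * M2) with (G * P1 * (Y * M2)) by ring. rewrite E2.
    replace (G * P1 * (Y' * P2)) with ((Y' * G) * (P1 * P2)) by ring.
    replace (Y' * (G * e) * (M1 * M2)) with ((Y' * G) * (e * (M1 * M2))) by ring.
    apply Rmult_le_compat_l; [nra|lra]. }
  apply Rmult_le_reg_r with (M1 * M2). nra. lra. Qed.

Lemma step_lo (X Y X' Y' G e P1 P2 M1 M2 : R) :
  0 <= Y' -> 0 <= G -> 0 < M1 -> 0 < M2 -> 0 <= P1 ->
  X' * M1 = X * P1 -> Y * M2 = Y' * P2 ->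
  Y * G <= X -> e * (M1 * M2) <= P1 * P2 -> Y' * (G * e) <= X'.
Proof. intros HY' HG HM1 HM2 HP1 E1 E2 HX Hk.
  assert (Y' * (G * e) * (M1 * M2) <= X' * (M1 * M2)).
  { replace (X' * (M1 * M2)) with (X * P1 * M2) by (rewrite <- E1; ring).
    apply Rle_trans with (Y * G * P1 * M2). 2:{ apply Rmult_le_compat_r; [lra|]. apply Rmult_le_compat_r; lra. }
    replace (Y * G * P1 * M2) with (G * P1 * (Y * M2)) by ring. rewrite E2.
    replace (G * P1 * (Y' * P2)) with ((Y' * G) * (P1 * P2)) by ring.
    replace (Y' * (G * e) * (M1 * M2)) with ((Y' * G) * (e * (M1 * M2))) by ring.
    apply Rmult_le_compat_l; [nra|lra]. }
  apply Rmult_le_reg_r with (M1 * M2). nra. lra. Qed.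

Lemma key_ineq (A B j J : R) : 0 < B -> B < A -> 0 <= j -> j + 1 <= J -> J <= B -> 2 * (J * J) <= A * A ->
  let d := 2 / B + 2 * (J * J) / (B * B) in
  (B - j) * (B + j + 1) * (A * A) <= (1 + d) * ((A + j + 1) * (A - j)) * (B * B) /\
  (1 - d) * ((A + j + 1) * (A - j)) * (B * B) <= (B - j) * (B + j + 1) * (A * A).
Proof. intros HB HBA Hj HjJ HJB HJA d.
  set (D := (A + j + 1) * (A - j) * (B * B)).
  set (U := (B - j) * (B + j + 1) * (A * A)).
  assert (HD : A * A * (B * B) / 2 <= D).
  { unfold D. assert (j * j + j <= J * J) by nra.
    assert ((A + j + 1) * (A - j) = A * A + A - (j * j + j)) by ring. rewrite H0.
    assert (A * A / 2 <= A * A + A - (j * j + j)) by lra. nra. }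
  assert (HUD : U - D = A * B * (A - B) - (j * j + j) * (A * A - B * B)) by (unfold U, D; ring).
  assert (dD1 : d * D >= A * A * B).
  { unfold d. assert (2 / B * D >= A * A * B).
    { apply Rle_ge. apply Rmult_le_reg_r with B; auto. unfold Rdiv.
      replace (2 * / B * D * B) with (2 * D) by (field; lra). nra. }
    assert (0 <= 2 * (J * J) / (B * B) * D). { apply Rmult_le_pos; [|nra]. unfold Rdiv. apply Rmult_le_pos. nra. left; apply Rinv_0_lt_compat; nra. }
    lra. }
  assert (dD2 : d * D >= J * J * (A * A)).
  { unfold d. assert (2 * (J * J) / (B * B) * D >= J * J * (A * A)).
    { apply Rle_ge. apply Rmult_le_reg_r with (B * B). nra. unfold Rdiv.
      replace (2 * (J * J) * / (B * B) * D * (B * B)) with (2 * (J * J) * D) by (field; lra).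
      assert (0 <= J * J) by nra. nra. }
    assert (0 <= 2 / B * D). { apply Rmult_le_pos; [|nra]. unfold Rdiv. apply Rmult_le_pos. lra. left; apply Rinv_0_lt_compat; lra. }
    lra. }
  fold D U. split.
  - assert (U - D <= A * A * B).
    { rewrite HUD. assert (0 <= (j * j + j) * (A * A - B * B)) by (apply Rmult_le_pos; nra).
      assert (A * B * (A - B) <= A * A * B) by nra. lra. }
    replace ((1 + d) * ((A + j + 1) * (A - j)) * (B * B)) with (D + d * D) by (unfold D; ring). lra.
  - assert (D - U <= J * J * (A * A)).
    { assert (D - U = (j * j + j) * (A * A - B * B) - A * B * (A - B)) by lra. rewrite H.
      assert (0 <= A * B * (A - B)) by (apply Rmult_le_pos; nra).
      assert ((j * j + j) * (A * A - B * B) <= J * J * (A * A)).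
      { assert (j * j + j <= J * J) by nra. assert (0 <= B * B) by nra. nra. }
      lra. }
    replace ((1 - d) * ((A + j + 1) * (A - j)) * (B * B)) with (D - d * D) by (unfold D; ring). lra. Qed.


Section G.
Variables p q : R.
Hypothesis hp : 0 < q. Hypothesis hqp : q < p. Hypothesis hpq : p + q = 1.
Variables a b : nat.
Hypothesis hab : INR a * q = INR b * p.
Hypothesis hb : (0 < b)%nat.

Notation pa := (pi p q (a + b)).

Lemma b_lt_a : INR b < INR a.
Proof. assert (0 < INR b) by (apply lt_0_INR; auto). nra. Qed.

Lemma R_plus j : pa (S (a + j)) * INR (S (a + j)) * q = pa (a + j) * (INR b - INR j) * p.
Proof. rewrite pi_ratio by auto. rewrite !plus_INR. f_equal. f_equal. ring. Qed.

Lemma R_minus j : (S j <= a)%nat ->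
  pa (a - j) * INR (a - j) * q = pa (a - S j) * (INR b + INR (S j)) * p.
Proof. intros H. replace (a - j)%nat with (S (a - S j)) at 1 2 by lia.
  rewrite pi_ratio by auto. f_equal. f_equal. rewrite plus_INR, minus_INR by lia. rewrite S_INR. ring. Qed.

Lemma mode j : pa (a + j) <= pa a.
Proof. induction j. rewrite Nat.add_0_r; lra.
  apply Rle_trans with (pa (a + j)); auto. replace (a + S j)%nat with (S (a + j)) by lia.
  pose proof (R_plus j). pose proof (pi_nonneg p q hp hqp (a + b) (a + j)).
  pose proof (pi_nonneg p q hp hqp (a + b) (S (a + j))).
  assert (0 < INR (S (a + j)) * q). { apply Rmult_lt_0_compat; auto. apply lt_0_INR; lia. }
  apply Rmult_le_reg_r with (INR (S (a + j)) * q); auto. rewrite <- Rmult_assoc, H.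
  assert ((INR b - INR j) * p <= INR (S (a + j)) * q).
  { rewrite S_INR, plus_INR. pose proof (pos_INR j). nra. }
  rewrite Rmult_assoc. apply Rmult_le_compat_l; auto. Qed.

Lemma lower n j : (2 * n <= b)%nat -> (j <= n)%nat ->
  pa a * (1 - 2 * INR n / INR b) ^ j <= pa (a + j).
Proof. intros Hn. induction j; intros Hj. rewrite Nat.add_0_r; simpl; lra.
  set (u := 2 * INR n / INR b).
  assert (HB : 0 < INR b) by (apply lt_0_INR; auto).
  assert (Hu : 0 <= u <= 1). { unfold u. split. apply Rmult_le_pos. pose proof (pos_INR n); lra. left; apply Rinv_0_lt_compat; lra.
    apply Rmult_le_reg_r with (INR b); auto. unfold Rdiv. rewrite Rmult_assoc, Rinv_l by lra.
    apply le_INR in Hn. rewrite mult_INR in Hn. simpl in Hn. lra. }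
  specialize (IHj ltac:(lia)).
  replace (a + S j)%nat with (S (a + j)) by lia.
  pose proof (R_plus j). pose proof (pi_nonneg p q hp hqp (a + b) (a + j)).
  assert (0 < INR (S (a + j)) * q). { apply Rmult_lt_0_compat; auto. apply lt_0_INR; lia. }
  apply Rmult_le_reg_r with (INR (S (a + j)) * q); auto.
  replace (pa (S (a + j)) * (INR (S (a + j)) * q)) with (pa (a + j) * (INR b - INR j) * p) by (rewrite <- H; ring).
  assert (Hk : (1 - u) * (INR (S (a + j)) * q) <= (INR b - INR j) * p).
  { rewrite S_INR, plus_INR.
    assert (Hua : u * INR a * q = 2 * INR n * p). { unfold u. rewrite Rmult_assoc, hab. field. lra. }
    assert (HSj : INR (S j) <= INR n) by (apply le_INR; lia). rewrite S_INR in HSj.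
    pose proof (pos_INR j). assert (0 <= u * (INR j + 1) * q) by (apply Rmult_le_pos; [apply Rmult_le_pos|]; lra).
    assert (INR j + 1 <= 2 * INR n * p) by nra.
    nra. }
  assert (0 <= (1 - u) ^ j) by (apply pow_le; lra).
  simpl pow. replace (pa a * ((1 - u) * (1 - u) ^ j) * (INR (S (a + j)) * q)) with
     (pa a * (1 - u) ^ j * ((1 - u) * (INR (S (a + j)) * q))) by ring.
  apply Rle_trans with (pa a * (1 - u) ^ j * ((INR b - INR j) * p)).
  apply Rmult_le_compat_l; auto. apply Rmult_le_pos; auto. apply pi_nonneg; auto.
  replace (pa (a + j) * (INR b - INR j) * p) with (pa (a + j) * ((INR b - INR j) * p)) by ring.
  apply Rmult_le_compat_r; auto. assert (INR j <= INR b). { apply le_INR; lia. } nra. Qed.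

End G.


Lemma pow_le1 x n : 0 <= x <= 1 -> x ^ n <= 1.
Proof. intros H. induction n; simpl. lra. assert (0 <= x ^ n) by (apply pow_le; lra). nra. Qed.

Lemma sm_const cst n : sm (fun _ => cst) n = INR n * cst.
Proof. induction n. simpl; lra. change (sm (fun _ => cst) n + cst = INR (S n) * cst). rewrite IHn, S_INR. ring. Qed.

Lemma convert_key (A B j e P1 P2 M1 M2 p q : R) : 0 < B -> A * q = B * p ->
  P1 = (B - j) * p -> P2 = (B + j + 1) * p -> M1 = (A + j + 1) * q -> M2 = (A - j) * q ->
  ((B - j) * (B + j + 1) * (A * A) <= e * ((A + j + 1) * (A - j)) * (B * B) -> P1 * P2 <= e * (M1 * M2)) /\
  (e * ((A + j + 1) * (A - j)) * (B * B) <= (B - j) * (B + j + 1) * (A * A) -> e * (M1 * M2) <= P1 * P2).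
Proof. intros HB Hab -> -> -> ->.
  assert (Hsq : (B * p) * (B * p) = (A * q) * (A * q)) by (rewrite Hab; ring).
  assert (HB2 : 0 < B * B) by nra.
  split; intros H.
  - apply Rmult_le_reg_r with (B * B); auto.
    replace ((B - j) * p * ((B + j + 1) * p) * (B * B)) with ((B - j) * (B + j + 1) * ((B * p) * (B * p))) by ring.
    rewrite Hsq.
    replace (e * ((A + j + 1) * q * ((A - j) * q)) * (B * B)) with (e * ((A + j + 1) * (A - j)) * (B * B) * (q * q)) by ring.
    replace ((B - j) * (B + j + 1) * (A * q * (A * q))) with ((B - j) * (B + j + 1) * (A * A) * (q * q)) by ring.
    apply Rmult_le_compat_r; nra.
  - apply Rmult_le_reg_r with (B * B); auto.
    replace ((B - j) * p * ((B + j + 1) * p) * (B * B)) with ((B - j) * (B + j + 1) * ((B * p) * (B * p))) by ring.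
    rewrite Hsq.
    replace (e * ((A + j + 1) * q * ((A - j) * q)) * (B * B)) with (e * ((A + j + 1) * (A - j)) * (B * B) * (q * q)) by ring.
    replace ((B - j) * (B + j + 1) * (A * q * (A * q))) with ((B - j) * (B + j + 1) * (A * A) * (q * q)) by ring.
    apply Rmult_le_compat_r; nra. Qed.

Section H.
Variables p q : R.
Hypothesis hp : 0 < q. Hypothesis hqp : q < p. Hypothesis hpq : p + q = 1.
Variables a b : nat.
Hypothesis hab : INR a * q = INR b * p.
Hypothesis hb : (0 < b)%nat.

Notation pa := (pi p q (a + b)).

Lemma ba : (b < a)%nat.
Proof. pose proof (b_lt_a p q hp hqp a b hab hb). apply INR_lt; auto. Qed.

Definition Lj j := if (S j <=? a)%nat then pa (a - S j) else 0.
Definition Uj j := pa (a + S j).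

Lemma Lj_nonneg j : 0 <= Lj j.
Proof. unfold Lj. destruct (S j <=? a)%nat. apply pi_nonneg; auto. lra. Qed.
Lemma Uj_nonneg j : 0 <= Uj j.
Proof. unfold Uj. apply pi_nonneg; auto. Qed.

Lemma tot : 1 = pa a + sm (fun j => Lj j + Uj j) (a + b).
Proof. rewrite <- (pi_total p q hpq (a + b)). apply split_sum. lia. intros; apply pi_zero; auto. Qed.

Lemma sumL : sm Lj (a + b) <= 1.
Proof. pose proof tot. rewrite sm_plus in H. pose proof (pi_nonneg p q hp hqp (a+b) a).
  assert (0 <= sm Uj (a + b)) by (apply sm_nonneg; intros; apply Uj_nonneg). lra. Qed.

Lemma var_split : INR a * q = sm (fun j => (Lj j + Uj j) * INR (S j) ^ 2) (a + b).
Proof. rewrite <- (variance p q hpq a b hab).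
  rewrite (split_sum (fun x => pa x * (INR x - INR a) ^ 2) a (a + b)); [|lia|intros; rewrite pi_zero by auto; ring].
  replace (INR a - INR a) with 0 by ring. rewrite pow_i by lia. rewrite Rmult_0_r, Rplus_0_l.
  apply sm_ext. intros j Hj. unfold Lj, Uj. destruct (Nat.leb_spec (S j) a).
  - rewrite minus_INR, plus_INR by auto. ring.
  - rewrite plus_INR. ring. Qed.

Lemma phi_split : Phi p q a b = pa a + sm (fun j => Lj j + Uj j * (rr p q ^ 2) ^ (S j)) (a + b).
Proof. unfold Phi. rewrite (split_sum (fun x => pa x * phi p q a x) a (a + b)); [|lia|intros; rewrite pi_zero by auto; ring].
  assert (P0 : phi p q a a = 1) by (unfold phi; rewrite Nat.leb_refl; auto).
  assert (P1 : forall j, phi p q a (a - S j) = 1).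
  { intros; unfold phi. replace (a - S j <=? a)%nat with true by (symmetry; apply Nat.leb_le; lia). auto. }
  assert (P2 : forall j, phi p q a (a + S j) = (rr p q ^ 2) ^ (S j)).
  { intros; unfold phi. replace (a + S j <=? a)%nat with false by (symmetry; apply Nat.leb_gt; lia).
    replace (a + S j - a)%nat with (S j) by lia. rewrite pow_mult. auto. }
  rewrite P0, Rmult_1_r. f_equal. apply sm_ext. intros j Hj. rewrite P1, P2.
  unfold Lj, Uj. destruct (S j <=? a)%nat; ring. Qed.

Lemma pa_small n : (1 <= n)%nat -> (8 * n * n <= b)%nat -> pa a * (3 / 4 * INR n) <= 1.
Proof. intros Hn1 Hn.
  assert (HB : 0 < INR b) by (apply lt_0_INR; auto).
  assert (Hn' : 8 * INR n * INR n <= INR b). { apply le_INR in Hn. rewrite !mult_INR in Hn. simpl in Hn. lra. }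
  assert (HnR : 1 <= INR n) by (apply (le_INR 1); auto).
  assert (H1 : forall j, (j < n)%nat -> 3 / 4 * pa a <= pa (a + j)).
  { intros j Hj. eapply Rle_trans; [|apply (lower p q hp hqp hpq a b hab hb n j); nia].
    set (u := 2 * INR n / INR b).
    assert (Hu : INR n * u <= 1 / 4). { unfold u. apply Rmult_le_reg_r with (INR b); auto. unfold Rdiv.
      replace (INR n * (2 * INR n * / INR b) * INR b) with (2 * INR n * INR n) by (field; lra). lra. }
    assert (0 <= u). { unfold u. apply Rmult_le_pos. lra. left; apply Rinv_0_lt_compat; lra. }
    assert (INR j <= INR n) by (apply le_INR; lia).
    pose proof (bernoulli u j ltac:(nra)).
    pose proof (pi_nonneg p q hp hqp (a+b) a).
    assert (INR j * u <= INR n * u) by (apply Rmult_le_compat_r; lra).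
    assert (H34 : 3 / 4 <= (1 - u) ^ j) by lra.
    apply Rmult_le_compat_l with (r := pa a) in H34; auto. lra. }
  assert (H2 : sm (fun j => pa (a + j)) n <= 1).
  { destruct n; [lia|]. rewrite sm_shift, Nat.add_0_r.
    pose proof tot. rewrite sm_plus in H.
    assert (sm (fun i => pa (a + S i)) n <= sm Uj (a + b)).
    { apply sm_len_le. lia. intros; apply Uj_nonneg. }
    assert (0 <= sm Lj (a + b)) by (apply sm_nonneg; intros; apply Lj_nonneg). lra. }
  assert (H3 : sm (fun _ => 3 / 4 * pa a) n <= sm (fun j => pa (a + j)) n) by (apply sm_le; auto).
  rewrite sm_const in H3. lra. Qed.

Variable J : nat.
Hypothesis hJb : (J <= b)%nat.
Hypothesis hJa : 2 * (INR J * INR J) <= INR a * INR a.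
Definition dl := 2 / INR b + 2 * (INR J * INR J) / (INR b * INR b).
Hypothesis hd : dl <= 1.

Lemma dl_pos : 0 <= dl.
Proof. unfold dl. assert (0 < INR b) by (apply lt_0_INR; auto).
  assert (0 < / INR b) by (apply Rinv_0_lt_compat; auto).
  assert (0 < / (INR b * INR b)) by (apply Rinv_0_lt_compat; nra).
  unfold Rdiv. assert (0 <= INR J * INR J) by nra. nra. Qed.

Lemma compare j : (j <= J)%nat ->
  pa (a - j) * (1 - dl) ^ j <= pa (a + j) <= pa (a - j) * (1 + dl) ^ j.
Proof. induction j; intros Hj.
  - rewrite Nat.add_0_r, Nat.sub_0_r. simpl. lra.
  - specialize (IHj ltac:(lia)). pose proof ba as Hba. pose proof dl_pos.
    assert (HB : 0 < INR b) by (apply lt_0_INR; auto).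
    assert (HjR : INR (S j) <= INR J) by (apply le_INR; auto). rewrite S_INR in HjR.
    assert (HJB : INR J <= INR b) by (apply le_INR; auto).
    assert (HBA : INR b < INR a) by (apply lt_INR; auto).
    pose proof (key_ineq (INR a) (INR b) (INR j) (INR J) HB HBA (pos_INR j) HjR HJB hJa) as [K1 K2].
    fold dl in K1, K2.
    pose proof (convert_key (INR a) (INR b) (INR j) (1 + dl) ((INR b - INR j) * p) ((INR b + INR j + 1) * p)
      ((INR a + INR j + 1) * q) ((INR a - INR j) * q) p q HB hab eq_refl eq_refl eq_refl eq_refl) as [C1 _].
    pose proof (convert_key (INR a) (INR b) (INR j) (1 - dl) ((INR b - INR j) * p) ((INR b + INR j + 1) * p)
      ((INR a + INR j + 1) * q) ((INR a - INR j) * q) p q HB hab eq_refl eq_refl eq_refl eq_refl) as [_ C2].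
    assert (E1 : pa (a + S j) * ((INR a + INR j + 1) * q) = pa (a + j) * ((INR b - INR j) * p)).
    { replace (a + S j)%nat with (S (a + j)) by lia. rewrite <- Rmult_assoc, <- Rmult_assoc, <- R_plus; auto.
      rewrite S_INR, plus_INR. ring. }
    assert (E2 : pa (a - j) * ((INR a - INR j) * q) = pa (a - S j) * ((INR b + INR j + 1) * p)).
    { rewrite <- Rmult_assoc, <- Rmult_assoc, <- minus_INR by lia. rewrite R_minus by (auto; lia).
      rewrite S_INR. ring. }
    assert (HM1 : 0 < (INR a + INR j + 1) * q) by (pose proof (pos_INR j); nra).
    assert (HM2 : 0 < (INR a - INR j) * q) by nra.
    assert (HP1 : 0 <= (INR b - INR j) * p) by nra.
    pose proof (pi_nonneg p q hp hqp (a+b) (a - S j)).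
    split.
    + simpl pow. replace ((1 - dl) * (1 - dl) ^ j) with ((1 - dl) ^ j * (1 - dl)) by ring.
      apply (step_lo (pa (a+j)) (pa (a-j)) (pa (a + S j)) (pa (a - S j)) ((1-dl)^j) (1-dl) ((INR b - INR j)*p) ((INR b + INR j + 1)*p) ((INR a + INR j + 1)*q) ((INR a - INR j)*q)); auto.
      all: first [apply pow_le; lra | apply C2; lra | lra | idtac].
    + simpl pow. replace ((1 + dl) * (1 + dl) ^ j) with ((1 + dl) ^ j * (1 + dl)) by ring.
      apply (step_up (pa (a+j)) (pa (a-j)) (pa (a + S j)) (pa (a - S j)) ((1+dl)^j) (1+dl) ((INR b - INR j)*p) ((INR b + INR j + 1)*p) ((INR a + INR j + 1)*q) ((INR a - INR j)*q)); auto.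
      all: first [apply pow_le; lra | apply C1; lra | lra | idtac]. Qed.

Lemma diff_bound j : (j <= J)%nat -> INR J * dl <= 1 / 2 ->
  Rabs (pa (a + j) - pa (a - j)) <= 2 * INR J * dl * pa (a - j).
Proof. intros Hj HJd. pose proof (compare j Hj) as [C1 C2]. pose proof dl_pos.
  assert (HjJ : INR j <= INR J) by (apply le_INR; auto).
  set (y := INR j * dl).
  assert (Hy : 0 <= y <= 1 / 2). { unfold y. split. apply Rmult_le_pos; auto. apply pos_INR. nra. }
  pose proof (bernoulli dl j ltac:(lra)) as Bm. fold y in Bm.
  assert (Gp : 0 <= (1 + dl) ^ j) by (apply pow_le; lra).
  assert (GG : (1 + dl) ^ j * (1 - dl) ^ j <= 1).
  { rewrite <- Rpow_mult_distr. apply pow_le1. nra. }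
  assert (Gup : (1 + dl) ^ j <= 1 + 2 * y) by nra.
  assert (Y : 0 <= pa (a - j)) by (apply pi_nonneg; auto).
  assert (y <= INR J * dl) by (unfold y; nra).
  apply Rabs_le. split; nra. Qed.

End H.


Section M.
Variables p q : R.
Hypothesis hp : 0 < q. Hypothesis hqp : q < p. Hypothesis hpq : p + q = 1.
Variables a b : nat.
Hypothesis hab : INR a * q = INR b * p.
Hypothesis hb : (0 < b)%nat.
Variable J : nat.
Hypothesis hJ1 : (1 <= J)%nat.
Hypothesis hJb : (J <= b)%nat.
Hypothesis hJa : 2 * (INR J * INR J) <= INR a * INR a.
Hypothesis hd : dl b J <= 1.
Hypothesis hJd : INR J * dl b J <= 1 / 2.

Notation pa := (pi p q (a + b)).
Notation Lj := (Lj p q a b).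
Notation Uj := (Uj p q a b).

Lemma pointwise j : Rabs (Lj j - Uj j) <=
  2 * INR J * dl b J * Lj j + (Lj j + Uj j) * INR (S j) ^ 2 / (INR J * INR J).
Proof. pose proof (Lj_nonneg p q hp hqp a b j) as HL. pose proof (Uj_nonneg p q hp hqp a b j) as HU.
  pose proof (dl_pos b hb J) as Hdl.
  assert (HJR : 1 <= INR J) by (apply (le_INR 1); auto).
  pose proof (ba p q hp hqp a b hab hb) as Hba.
  destruct (Nat.le_gt_cases (S j) J).
  - unfold Submission.Lj, Submission.Uj. replace (S j <=? a)%nat with true by (symmetry; apply Nat.leb_le; lia).
    pose proof (diff_bound p q hp hqp hpq a b hab hb J hJb hJa hd (S j) H hJd).
    rewrite Rabs_minus_sym.
    assert (0 <= (pa (a - S j) + pa (a + S j)) * INR (S j) ^ 2 / (INR J * INR J)).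
    { unfold Rdiv. apply Rmult_le_pos. apply Rmult_le_pos. unfold Submission.Lj, Submission.Uj in HL, HU.
      replace (S j <=? a)%nat with true in HL by (symmetry; apply Nat.leb_le; lia). lra.
      apply pow_le, pos_INR. left; apply Rinv_0_lt_compat; nra. }
    lra.
  - assert (HS : INR J * INR J <= INR (S j) ^ 2).
    { assert (INR J <= INR (S j)) by (apply le_INR; lia). replace (INR (S j) ^ 2) with (INR (S j) * INR (S j)) by ring. nra. }
    assert (Lj j + Uj j <= (Lj j + Uj j) * INR (S j) ^ 2 / (INR J * INR J)).
    { apply Rmult_le_reg_r with (INR J * INR J). nra. unfold Rdiv.
      rewrite Rmult_assoc, Rinv_l by nra. rewrite Rmult_1_r. apply Rmult_le_compat_l; lra. }
    assert (0 <= 2 * INR J * dl b J * Lj j) by (apply Rmult_le_pos; [|lra]; nra).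
    apply Rabs_le. split; lra. Qed.

Lemma main_bound : Rabs (2 * Phi p q a b - 1) <=
  pa a * (1 + 2 / (1 - rr p q ^ 2)) + 2 * INR J * dl b J + INR a * q / (INR J * INR J).
Proof.
  pose proof (phi_split p q a b hb) as HP.
  pose proof (tot p q hpq a b hb) as HT.
  pose proof (rr_pos p q hp hqp) as Hr.
  set (rho := rr p q ^ 2) in *.
  assert (Hrho : 0 <= rho < 1) by (unfold rho; simpl; nra).
  assert (E : 2 * Phi p q a b - 1 = pa a + sm (fun j => Lj j - Uj j) (a + b) + 2 * sm (fun j => Uj j * rho ^ S j) (a + b)).
  { rewrite HP. rewrite sm_plus in HT. rewrite sm_plus, sm_minus. lra. }
  rewrite E.
  assert (B1 : Rabs (sm (fun j => Lj j - Uj j) (a + b)) <= 2 * INR J * dl b J + INR a * q / (INR J * INR J)).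
  { eapply Rle_trans. apply sm_abs. eapply Rle_trans. apply sm_le. intros; apply pointwise.
    rewrite sm_plus. rewrite sm_scal.
    rewrite (sm_ext (fun i => (Lj i + Uj i) * INR (S i) ^ 2 / (INR J * INR J))
                    (fun i => / (INR J * INR J) * ((Lj i + Uj i) * INR (S i) ^ 2))) by (intros; unfold Rdiv; ring).
    rewrite sm_scal. rewrite <- var_split by auto.
    pose proof (sumL p q hp hqp hpq a b hb) as HS.
    assert (0 <= 2 * INR J * dl b J) by (pose proof (dl_pos b hb J); pose proof (pos_INR J); nra).
    unfold Rdiv. rewrite (Rmult_comm (INR a * q)). apply Rplus_le_compat_r. nra. }
  assert (B2 : 0 <= sm (fun j => Uj j * rho ^ S j) (a + b) <= pa a / (1 - rho)).
  { split. apply sm_nonneg. intros; apply Rmult_le_pos. apply Uj_nonneg; auto. apply pow_le; lra.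
    eapply Rle_trans. apply sm_le with (g := fun j => pa a * rho ^ j).
    intros i _. unfold Submission.Uj. replace (a + S i)%nat with (a + S i)%nat by auto.
    pose proof (mode p q hp hqp hpq a b hab hb (S i)). simpl pow.
    assert (0 <= rho ^ i) by (apply pow_le; lra).
    assert (0 <= pa (a + S i)) by (apply pi_nonneg; auto).
    assert (rho * rho ^ i <= rho ^ i) by nra.
    apply Rle_trans with (pa (a + S i) * rho ^ i). apply Rmult_le_compat_l; auto.
    apply Rmult_le_compat_r; auto.
    rewrite sm_scal. pose proof (geom_sum rho (a + b) Hrho). unfold Rdiv.
    apply Rmult_le_compat_l; auto. apply pi_nonneg; auto. }
  pose proof (pi_nonneg p q hp hqp (a + b) a).
  assert (Rabs (pa a + sm (fun j => Lj j - Uj j) (a + b) + 2 * sm (fun j => Uj j * rho ^ S j) (a + b)) <=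
          pa a + Rabs (sm (fun j => Lj j - Uj j) (a + b)) + 2 * (pa a / (1 - rho))).
  { eapply Rle_trans. apply Rabs_triang. rewrite (Rabs_right (2 * _)) by lra.
    eapply Rle_trans. apply Rplus_le_compat_r. apply Rabs_triang. rewrite Rabs_right by lra. lra. }
  assert (pa a * (1 + 2 / (1 - rho)) = pa a + 2 * (pa a / (1 - rho))) by (field; lra).
  lra. Qed.
End M.


Section T.
Variables p q : R.
Hypothesis hp : 0 < q. Hypothesis hqp : q < p. Hypothesis hpq : p + q = 1.
Variables k1 k2 : nat.
Hypothesis hk2 : (0 < k2)%nat.
Hypothesis hkpq : INR k1 * q = INR k2 * p.

Definition C0 := 1 + 2 / (1 - rr p q ^ 2).

Lemma bound_t (t M : nat) : let s := Nat.sqrt t in let n := Nat.div s 3 in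
  (1 <= M)%nat -> (3 <= s)%nat -> (M <= s)%nat -> (2 * M * M <= s)%nat -> (4 * M + 4 * M * M * M <= s)%nat ->
  Rabs (2 * Phi p q (t * k1) (t * k2) - 1) <=
  C0 * (4 / (3 * INR n)) + (4 * INR M + 4 * INR M ^ 3) / INR s + 4 * INR k1 / INR M.
Proof. intros s n HM1 Hs3 HMs HM2 HM3.
  pose proof (Nat.sqrt_spec t (Nat.le_0_l t)) as [Hs1 Hs2]. fold s in Hs1, Hs2.
  pose proof (Nat.div_mod s 3 ltac:(lia)) as Hdm. pose proof (Nat.mod_upper_bound s 3 ltac:(lia)) as Hmu.
  fold n in Hdm.
  assert (Hn1 : (1 <= n)%nat) by lia.
  assert (Hk2' : (1 <= k2)%nat) by lia.
  set (a := (t * k1)%nat). set (b := (t * k2)%nat). set (J := (M * s)%nat).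
  assert (hab : INR a * q = INR b * p). { unfold a, b. rewrite !mult_INR. rewrite Rmult_assoc, hkpq. ring. }
  assert (Htb : (t <= b)%nat) by (unfold b; nia).
  assert (hb : (0 < b)%nat) by nia.
  assert (Hba : (b < a)%nat) by (apply (ba p q hp hqp a b hab hb)).
  assert (Hta : (t <= a)%nat) by nia.
  assert (HJ1 : (1 <= J)%nat) by (unfold J; nia).
  assert (HJb : (J <= b)%nat) by (unfold J; nia).
  assert (HJa' : (2 * (J * J) <= a * a)%nat) by (unfold J; nia).
  assert (HJa : 2 * (INR J * INR J) <= INR a * INR a).
  { apply le_INR in HJa'. rewrite !mult_INR in HJa'. simpl in HJa'. lra. }
  assert (Hnb : (8 * n * n <= b)%nat) by nia.
  assert (HsR : 3 <= INR s) by (replace 3 with (INR 3) by (simpl; lra); apply le_INR; auto).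
  assert (HMR : 1 <= INR M) by (apply (le_INR 1); auto).
  assert (HbR : INR s * INR s <= INR b). { apply le_INR in Htb. apply le_INR in Hs1. rewrite mult_INR in Hs1. lra. }
  assert (HJR : INR J = INR M * INR s) by (unfold J; apply mult_INR).
  assert (HM3R : 4 * INR M + 4 * INR M ^ 3 <= INR s).
  { apply le_INR in HM3. rewrite plus_INR, !mult_INR in HM3. simpl in HM3. simpl. lra. }
  assert (HB0 : 0 < INR b) by nra.
  assert (HJd : INR J * dl b J <= (2 * INR M + 2 * INR M ^ 3) / INR s).
  { unfold dl. rewrite HJR.
    assert (E : INR M * INR s * (2 / INR b + 2 * (INR M * INR s * (INR M * INR s)) / (INR b * INR b))
              = 2 * INR M * (INR s / INR b) + 2 * INR M ^ 3 * ((INR s * INR s * INR s) / (INR b * INR b))) by (field; lra).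
    rewrite E.
    assert (E1 : INR s / INR b <= / INR s).
    { apply Rmult_le_reg_r with (INR b * INR s). nra. unfold Rdiv.
      replace (INR s * / INR b * (INR b * INR s)) with (INR s * INR s) by (field; lra).
      replace (/ INR s * (INR b * INR s)) with (INR b) by (field; lra). lra. }
    assert (E2 : INR s * INR s * INR s / (INR b * INR b) <= / INR s).
    { apply Rmult_le_reg_r with (INR b * INR b * INR s). nra. unfold Rdiv.
      replace (INR s * INR s * INR s * / (INR b * INR b) * (INR b * INR b * INR s)) with ((INR s * INR s) * (INR s * INR s)) by (field; lra).
      replace (/ INR s * (INR b * INR b * INR s)) with (INR b * INR b) by (field; lra).
      assert (0 <= INR s * INR s) by nra. nra. }
    assert (0 <= INR M ^ 3) by (apply pow_le; lra).
    replace ((2 * INR M + 2 * INR M ^ 3) / INR s) with (2 * INR M * / INR s + 2 * INR M ^ 3 * / INR s) by (field; lra).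
    apply Rplus_le_compat; apply Rmult_le_compat_l; nra. }
  assert (HJd2 : INR J * dl b J <= 1 / 2).
  { eapply Rle_trans; [apply HJd|]. apply Rmult_le_reg_r with (INR s). lra. unfold Rdiv.
    rewrite Rmult_assoc, Rinv_l by lra. lra. }
  assert (Hdl : dl b J <= 1).
  { pose proof (dl_pos b hb J). assert (1 <= INR J) by (apply (le_INR 1); auto). nra. }
  pose proof (main_bound p q hp hqp hpq a b hab hb J HJ1 HJb HJa Hdl HJd2) as MB.
  fold C0 in MB. fold (rr p q) in MB.
  pose proof (pa_small p q hp hqp hpq a b hab hb n Hn1 Hnb) as PS.
  assert (HnR : 1 <= INR n) by (apply (le_INR 1); auto).
  assert (PA : pi p q (a + b) a <= 4 / (3 * INR n)).
  { apply Rmult_le_reg_r with (3 * INR n). lra. unfold Rdiv. rewrite Rmult_assoc, Rinv_l by lra. lra. }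
  assert (HC0 : 0 <= C0). { unfold C0. pose proof (rr_pos p q hp hqp). assert (0 < 1 - rr p q ^ 2) by (simpl; nra).
    assert (0 < 2 / (1 - rr p q ^ 2)) by (apply Rdiv_lt_0_compat; lra). lra. }
  assert (AQ : INR a * q / (INR J * INR J) <= 4 * INR k1 / INR M).
  { rewrite HJR. unfold a. rewrite mult_INR.
    assert (Ht4 : INR t <= 4 * (INR s * INR s)).
    { apply lt_INR in Hs2. rewrite mult_INR, S_INR in Hs2. nra. }
    assert (Hk1 : 0 <= INR k1) by apply pos_INR.
    assert (q <= 1) by lra.
    assert (Hpos : 0 < INR M * INR s * (INR M * INR s)) by (apply Rmult_lt_0_compat; apply Rmult_lt_0_compat; lra).
    apply Rmult_le_reg_r with (INR M * INR s * (INR M * INR s)). lra. unfold Rdiv.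
    rewrite Rmult_assoc, Rinv_l by lra. rewrite Rmult_1_r.
    replace (4 * INR k1 * / INR M * (INR M * INR s * (INR M * INR s))) with (4 * INR k1 * (INR s * INR s) * INR M) by (field; lra).
    assert (INR t * INR k1 * q <= INR t * INR k1).
    { assert (0 <= INR t) by apply pos_INR. assert (0 <= INR t * INR k1) by (apply Rmult_le_pos; lra).
      rewrite <- (Rmult_1_r (INR t * INR k1)) at 2. apply Rmult_le_compat_l; lra. }
    assert (INR t * INR k1 <= 4 * INR k1 * (INR s * INR s)) by nra.
    assert (4 * INR k1 * (INR s * INR s) <= 4 * INR k1 * (INR s * INR s) * INR M).
    { assert (0 <= 4 * INR k1 * (INR s * INR s)) by nra. nra. }
    lra. }
  assert (C0 * pi p q (a + b) a <= C0 * (4 / (3 * INR n))) by (apply Rmult_le_compat_l; auto).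
  assert (2 * INR J * dl b J <= (4 * INR M + 4 * INR M ^ 3) / INR s).
  { replace ((4 * INR M + 4 * INR M ^ 3) / INR s) with (2 * ((2 * INR M + 2 * INR M ^ 3) / INR s)) by (field; lra). lra. }
  rewrite (Rmult_comm (pi p q (a + b) a) C0) in MB. lra. Qed.
End T.


Lemma div_pos_lt (x y e : R) : 0 < y -> x < y * e -> x / y < e.
Proof. intros Hy H. apply Rmult_lt_reg_r with y; auto. unfold Rdiv. rewrite Rmult_assoc, Rinv_l by lra. lra. Qed.

Theorem corollary3 (k1 k2 : nat) (hk2 : (0 < k2)%nat) (hk : (k2 < k1)%nat) :
  exists S : nat -> R,
    (forall t : nat, (0 < t)%nat -> is_series (term k1 k2 t) (S t)) /\
    is_lim_seq S ((1 / 4) / (pk k1 k2 - 1 / 2)).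
Proof.
  set (p := pk k1 k2). set (q := 1 - p).
  assert (Hk1R : INR k2 < INR k1) by (apply lt_INR; auto).
  assert (Hk2R : 0 < INR k2) by (apply lt_0_INR; auto).
  assert (HK : 0 < INR k1 + INR k2) by lra.
  assert (Hq : q = INR k2 / (INR k1 + INR k2)) by (unfold q, p, pk; field; lra).
  assert (Hp : p = INR k1 / (INR k1 + INR k2)) by (unfold p, pk; auto).
  assert (hp : 0 < q) by (rewrite Hq; apply Rdiv_lt_0_compat; lra).
  assert (hqp : q < p).
  { rewrite Hq, Hp. unfold Rdiv. apply Rmult_lt_compat_r. apply Rinv_0_lt_compat; lra. lra. }
  assert (hpq : p + q = 1) by (unfold q; ring).
  assert (hkpq : INR k1 * q = INR k2 * p) by (rewrite Hq, Hp; field; lra).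
  exists (fun t => Phi p q (t * k1) (t * k2) / (p - q)). split.
  - intros t _. eapply is_series_ext_R; [|apply (F_series p q hp hqp hpq (t * k1) (t * k2))].
    intros i. unfold term. rewrite c_C by lia. fold p. fold q. auto.
  - apply is_lim_seq_spec. intros eps. fold p.
    set (ep := 2 * (p - q) * eps).
    assert (Hep : 0 < ep) by (unfold ep; pose proof (cond_pos eps); nra).
    destruct (INR_archimed (ep / 3) (4 * INR k1) ltac:(lra)) as [M HM].
    assert (HM1 : (1 <= M)%nat).
    { destruct M. simpl in HM. lra. lia. }
    assert (HMR : 1 <= INR M) by (apply (le_INR 1); auto).
    destruct (INR_archimed (ep / 3) (4 * INR M + 4 * INR M ^ 3) ltac:(lra)) as [S1 HS1].
    destruct (INR_archimed (ep / 3) (C0 p q * 4 / 3) ltac:(lra)) as [S2 HS2].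
    set (S0 := (3 + M + 2 * M * M + (4 * M + 4 * M * M * M) + S1 + 3 * S2 + 3)%nat).
    exists (S0 * S0)%nat. intros t Ht.
    set (s := Nat.sqrt t).
    assert (Hs : (S0 <= s)%nat). { rewrite <- (Nat.sqrt_square S0). apply Nat.sqrt_le_mono; auto. }
    set (n := Nat.div s 3).
    pose proof (Nat.div_mod s 3 ltac:(lia)) as Hdm. pose proof (Nat.mod_upper_bound s 3 ltac:(lia)) as Hmu.
    fold n in Hdm.
    assert (Hn : (S2 <= n)%nat) by (unfold S0 in Hs; lia).
    pose proof (bound_t p q hp hqp hpq k1 k2 hk2 hkpq t M HM1 ltac:(unfold S0 in Hs; lia) ltac:(unfold S0 in Hs; lia)
      ltac:(unfold S0 in Hs; lia) ltac:(unfold S0 in Hs; lia)) as HB.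
    fold s n in HB.
    assert (HnR : INR S2 <= INR n) by (apply le_INR; auto).
    assert (HsR : INR S1 <= INR s) by (apply le_INR; unfold S0 in Hs; lia).
    assert (Hn1 : 1 <= INR n). { apply (le_INR 1). unfold S0 in Hs. lia. }
    assert (Hs1 : 1 <= INR s). { apply (le_INR 1). unfold S0 in Hs. lia. }
    assert (T1 : 4 * INR k1 / INR M < ep / 3) by (apply div_pos_lt; lra).
    assert (T2 : (4 * INR M + 4 * INR M ^ 3) / INR s < ep / 3).
    { apply div_pos_lt. lra. assert (INR S1 * (ep / 3) <= INR s * (ep / 3)) by (apply Rmult_le_compat_r; lra). lra. }
    assert (T3 : C0 p q * (4 / (3 * INR n)) < ep / 3).
    { replace (C0 p q * (4 / (3 * INR n))) with ((C0 p q * 4 / 3) / INR n) by (field; lra).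
      apply div_pos_lt. lra. assert (INR S2 * (ep / 3) <= INR n * (ep / 3)) by (apply Rmult_le_compat_r; lra). lra. }
    assert (HL : Phi p q (t * k1) (t * k2) / (p - q) - 1 / 4 / (p - 1 / 2) =
                 (2 * Phi p q (t * k1) (t * k2) - 1) / (2 * (p - q))).
    { unfold q. field; repeat split; lra. }
    rewrite HL. unfold Rdiv. rewrite Rabs_mult. rewrite (Rabs_right (/ (2 * (p - q)))).
    2:{ left; apply Rinv_0_lt_compat; lra. }
    apply Rmult_lt_reg_r with (2 * (p - q)). lra. rewrite Rmult_assoc, Rinv_l by lra.
    unfold ep in *. lra. Qed.
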